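(* Let $\overline{\mathcal R}(D_x,D_z)$ be defined exactly as $\mathcal R(D_x,D_z)$ except that the joint distribution is allowed to be of the form $p(x,y,z,u,v,w)=p(x,y)p(z|x)p(u|y)p(v|u,z)p(w|u,v,x,y)$. Then $\overline{\mathcal R}(D_x,D_z)=\mathcal R(D_x,D_z)$.
   Context: Let $\mathcal X,\mathcal Y,\mathcal Z,\hat{\mathcal X},\hat{\mathcal Z}$ be finite alphabets, $(X,Y,Z)\sim p(x,y)p(z|x)$, and $d_x:\mathcal X\times\hat{\mathcal X}\to[0,\infty)$, $d_z:\mathcal Z\times\hat{\mathcal Z}\to[0,\infty)$. $\mathcal R(D_x,D_z)$ is the set of all rate triples $(R_1,R_2,R_3)$ with $R_1\ge I(Y;U|Z)$, $R_2\ge I(Z;V|U,X)$, $R_3\ge I(X;W|U,V,Z)$ for some finite-alphabet random variables $U,V,W$ with joint distribution $p(x,y,z,u,v,w)=p(x,y)p(z|x)p(u|y)p(v|u,z)p(w|u,v,x)$ and deterministic functions $\hat X(U,W,Z)$, $\hat Z(U,V,X)$ with $\mathbb E\, d_x(X,\hat X(U,W,Z))\le D_x$ and $\mathbb E\, d_z(Z,\hat Z(U,V,X))\le D_z$. *)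

(* Defs.v *)
From mathcomp Require Import all_boot all_order all_algebra.
From mathcomp Require Import reals exp.
Set Implicit Arguments. Unset Strict Implicit. Unset Printing Implicit Defensive.
Import Order.TTheory GRing.Theory Num.Theory.
Local Open Scope ring_scope.

Section Defs.
Variable R : realType.

Definition is_pmf (T : finType) (p : T -> R) :=
  (forall t, 0 <= p t) /\ \sum_t p t = 1.

Definition is_kernel (A B : finType) (k : A -> B -> R) :=
  forall a, is_pmf (k a).

Definition prob (Om : finType) (P : Om -> R) (E : pred Om) : R :=
  \sum_(o | E o) P o.

(* conditional mutual information I(A;B|C) (natural log) of random variables
   fa, fb, fc defined on the finite probability space (Om, P):
   sum_{a,b,c} p(a,b,c) log (p(a,b,c) p(c) / (p(a,c) p(b,c))),
   terms with p(a,b,c) = 0 contributing 0. *)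
Definition cmi (Om A B C : finType) (P : Om -> R)
    (fa : Om -> A) (fb : Om -> B) (fc : Om -> C) : R :=
  \sum_(a : A) \sum_(b : B) \sum_(c : C)
    let pabc := prob P [pred o | [&& fa o == a, fb o == b & fc o == c]] in
    let pac := prob P [pred o | (fa o == a) && (fc o == c)] in
    let pbc := prob P [pred o | (fb o == b) && (fc o == c)] in
    let pc := prob P [pred o | fc o == c] in
    pabc * ln (pabc * pc / (pac * pbc)).

Definition expect (Om : finType) (P : Om -> R) (g : Om -> R) : R :=
  \sum_o P o * g o.

Section Region.
Variables (X Y Z Xh Zh : finType).
Variables (pxy : X -> Y -> R) (pzx : X -> Z -> R).
Variables (dx : X -> Xh -> R) (dz : Z -> Zh -> R).

Definition sspace (U V W : finType) := (X * Y * Z * U * V * W)%type.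
Definition sX {U V W : finType} (o : sspace U V W) : X := o.1.1.1.1.1.
Definition sY {U V W : finType} (o : sspace U V W) : Y := o.1.1.1.1.2.
Definition sZ {U V W : finType} (o : sspace U V W) : Z := o.1.1.1.2.
Definition sU {U V W : finType} (o : sspace U V W) : U := o.1.1.2.
Definition sV {U V W : finType} (o : sspace U V W) : V := o.1.2.
Definition sW {U V W : finType} (o : sspace U V W) : W := o.2.

Definition joint (U V W : finType) (pu : Y -> U -> R) (pv : U -> Z -> V -> R)
    (pw : U -> V -> X -> Y -> W -> R) (o : sspace U V W) : R :=
  pxy (sX o) (sY o) * pzx (sX o) (sZ o) * pu (sY o) (sU o)
  * pv (sU o) (sZ o) (sV o) * pw (sU o) (sV o) (sX o) (sY o) (sW o).

(* conditions common to both regions, given the (general) W-kernel pw *)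
Definition achieves (U V W : finType) (pu : Y -> U -> R) (pv : U -> Z -> V -> R)
    (pw : U -> V -> X -> Y -> W -> R) (xh : U -> W -> Z -> Xh)
    (zh : U -> V -> X -> Zh) (Dx Dz R1 R2 R3 : R) : Prop :=
  let P := joint pu pv pw in
  [/\ R1 >= cmi P sY sU sZ,
      R2 >= cmi P sZ sV (fun o => (sU o, sX o)),
      R3 >= cmi P sX sW (fun o => (sU o, sV o, sZ o)),
      expect P (fun o => dx (sX o) (xh (sU o) (sW o) (sZ o))) <= Dx &
      expect P (fun o => dz (sZ o) (zh (sU o) (sV o) (sX o))) <= Dz].

Definition region (Dx Dz R1 R2 R3 : R) : Prop :=
  exists (U V W : finType) (pu : Y -> U -> R) (pv : U -> Z -> V -> R)
    (pw : U -> V -> X -> W -> R) (xh : U -> W -> Z -> Xh) (zh : U -> V -> X -> Zh),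
    [/\ is_kernel pu, is_kernel (fun uz : U * Z => pv uz.1 uz.2),
        is_kernel (fun uvx : U * V * X => pw uvx.1.1 uvx.1.2 uvx.2) &
        achieves pu pv (fun u v x (_ : Y) => pw u v x) xh zh Dx Dz R1 R2 R3].

Definition region_bar (Dx Dz R1 R2 R3 : R) : Prop :=
  exists (U V W : finType) (pu : Y -> U -> R) (pv : U -> Z -> V -> R)
    (pw : U -> V -> X -> Y -> W -> R) (xh : U -> W -> Z -> Xh) (zh : U -> V -> X -> Zh),
    [/\ is_kernel pu, is_kernel (fun uz : U * Z => pv uz.1 uz.2),
        is_kernel (fun uvxy : U * V * X * Y =>
                     pw uvxy.1.1.1 uvxy.1.1.2 uvxy.1.2 uvxy.2) &
        achieves pu pv pw xh zh Dx Dz R1 R2 R3].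
End Region.
End Defs.

(* Main.v *)
Require Import Defs.
From mathcomp Require Import all_boot all_order all_algebra.
From mathcomp Require Import reals exp.
From mathcomp Require Import ring.
Import Order.TTheory GRing.Theory Num.Theory.
Set Implicit Arguments. Unset Strict Implicit.
Local Open Scope ring_scope.

Section Helpers.
Variable R : realType.

Lemma sum_pair (A B : finType) (F : A * B -> R) :
  \sum_(o : A * B) F o = \sum_a \sum_b F (a, b).
Proof. by rewrite pair_bigA; apply: eq_bigr => -[a b]. Qed.

Lemma nonempty_of_sum1 (T : finType) (F : T -> R) (P : Prop) :
  \sum_t F t = 1 -> (T -> P) -> P.
Proof.
move=> hs hP; case: (pickP (@predT T)) => [t _|h]; first exact: hP.
move: hs; rewrite big_pred0 // => /eqP; by rewrite eq_sym oner_eq0.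
Qed.

Variables (X Y Z : finType) (pxy : X -> Y -> R) (pzx : X -> Z -> R).
Variables (U V W : finType) (pu : Y -> U -> R) (pv : U -> Z -> V -> R).

Lemma expectA (pw pw2 : U -> V -> X -> Y -> W -> R)
  (s1 : forall u v x y, \sum_w pw u v x y w = 1)
  (s2 : forall u v x y, \sum_w pw2 u v x y w = 1)
  (g : sspace X Y Z U V W -> R) :
  (forall a w w', g (a, w) = g (a, w')) ->
  expect (joint pxy pzx pu pv pw) g = expect (joint pxy pzx pu pv pw2) g.
Proof.
move=> hg; rewrite /expect (@sum_pair _ W) (@sum_pair _ W); apply: eq_bigr => a _.
case: a => [[[[x y] z] u] v].
have [w0 _] : exists w0 : W, True.
  by apply: (nonempty_of_sum1 (s1 u v x y)) => w1; exists w1.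
have E : forall pw' : U -> V -> X -> Y -> W -> R,
  (forall u v x y, \sum_w pw' u v x y w = 1) ->
  \sum_w joint pxy pzx pu pv pw' (x, y, z, u, v, w) * g (x, y, z, u, v, w)
  = pxy x y * pzx x z * pu y u * pv u z v * g (x,y,z,u,v,w0).
  move=> pw' s'; rewrite -[RHS]mulr1 -(s' u v x y) big_distrr /=.
  by apply: eq_bigr => w _; rewrite /joint /= (hg _ w w0); ring.
by rewrite !E.
Qed.


Definition InvA (E : pred (sspace X Y Z U V W)) :=
  forall a w w', E (a, w) = E (a, w').
Definition InvB (E : pred (sspace X Y Z U V W)) :=
  forall x y y' z u v w, E (x, y, z, u, v, w) = E (x, y', z, u, v, w).

Lemma prob_expect (Om : finType) (P : Om -> R) (E : pred Om) :
  prob P E = expect P (fun o => (E o)%:R).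
Proof.
rewrite /prob /expect big_mkcond; apply: eq_bigr => o _.
by case: (E o); rewrite ?mulr1 ?mulr0.
Qed.

Lemma cmi_congr (Om A B C : finType) (P P' : Om -> R) (fa : Om -> A)
  (fb : Om -> B) (fc : Om -> C) (Inv : pred Om -> Prop) :
  (forall E, Inv E -> prob P E = prob P' E) ->
  (forall a b c, Inv [pred o | [&& fa o == a, fb o == b & fc o == c]]) ->
  (forall a c, Inv [pred o | (fa o == a) && (fc o == c)]) ->
  (forall b c, Inv [pred o | (fb o == b) && (fc o == c)]) ->
  (forall c, Inv [pred o | fc o == c]) ->
  cmi P fa fb fc = cmi P' fa fb fc.
Proof.
move=> H h1 h2 h3 h4; rewrite /cmi; apply: eq_bigr => a _; apply: eq_bigr => b _.
apply: eq_bigr => c _; cbv zeta.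
by rewrite !H.
Qed.

Lemma probA (pw pw2 : U -> V -> X -> Y -> W -> R)
  (s1 : forall u v x y, \sum_w pw u v x y w = 1)
  (s2 : forall u v x y, \sum_w pw2 u v x y w = 1) E :
  InvA E -> prob (joint pxy pzx pu pv pw) E = prob (joint pxy pzx pu pv pw2) E.
Proof.
move=> hE; rewrite !prob_expect; apply: expectA => // a w w'.
by rewrite (hE a w w').
Qed.

Lemma swap5 (Y' Z' U' V' W' : finType) (F : Y' -> Z' -> U' -> V' -> W' -> R) :
  \sum_y \sum_z \sum_u \sum_v \sum_w F y z u v w
  = \sum_z \sum_u \sum_v \sum_w \sum_y F y z u v w.
Proof.
rewrite exchange_big; apply: eq_bigr => z _.
rewrite exchange_big; apply: eq_bigr => u _.
rewrite exchange_big; apply: eq_bigr => v _.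
exact: exchange_big.
Qed.

Hypothesis pxy_ge0 : forall x y, 0 <= pxy x y.
Hypothesis pu_ge0 : forall y u, 0 <= pu y u.
Variable pw : U -> V -> X -> Y -> W -> R.
Hypothesis pw_ge0 : forall u v x y w, 0 <= pw u v x y w.
Hypothesis s1 : forall u v x y, \sum_w pw u v x y w = 1.
Variable y0 : Y.

Definition qq x u := \sum_y pxy x y * pu y u.
Definition pwb (u : U) (v : V) (x : X) (_ : Y) (w : W) : R :=
  if qq x u == 0 then pw u v x y0 w
  else (\sum_y pxy x y * pu y u * pw u v x y w) / qq x u.

Lemma pwb_ge0 u v x y w : 0 <= pwb u v x y w.
Proof.
rewrite /pwb; case: ifP => _ //.
apply: divr_ge0; apply: sumr_ge0 => y' _;
  by repeat apply: mulr_ge0.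
Qed.

Lemma pwb_sum u v x y : \sum_w pwb u v x y w = 1.
Proof.
have [hq|hq] := boolP (qq x u == 0); rewrite /pwb ?hq ?(negbTE hq).
  exact: s1.
rewrite -mulr_suml exchange_big /=.
rewrite (eq_bigr (fun y' => pxy x y' * pu y' u)); last first.
  by move=> y' _; rewrite -mulr_sumr s1 mulr1.
by rewrite divff.
Qed.

Lemma key x u v w :
  \sum_y pxy x y * pu y u * pwb u v x y w = \sum_y pxy x y * pu y u * pw u v x y w.
Proof.
rewrite -big_distrl /= -/(qq x u) /pwb; case: ifP => hq.
  rewrite (eqP hq) mul0r; apply/esym/big1 => y _.
  have hge : forall y', predT y' -> 0 <= pxy x y' * pu y' u.
    by move=> y' _; apply: mulr_ge0.
  by rewrite (psumr_eq0P hge (eqP hq)) ?mul0r.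
by rewrite mulrC divfK // hq.
Qed.

Lemma expectB (g : sspace X Y Z U V W -> R) :
  (forall x y y' z u v w, g (x, y, z, u, v, w) = g (x, y', z, u, v, w)) ->
  expect (joint pxy pzx pu pv pw) g = expect (joint pxy pzx pu pv pwb) g.
Proof.
move=> hg; rewrite /expect !sum_pair; apply: eq_bigr => x _.
rewrite swap5 [RHS]swap5; apply: eq_bigr => z _; apply: eq_bigr => u _.
apply: eq_bigr => v _; apply: eq_bigr => w _.
have E : forall pw' : U -> V -> X -> Y -> W -> R,
  \sum_y joint pxy pzx pu pv pw' (x, y, z, u, v, w) * g (x, y, z, u, v, w)
  = (pzx x z * pv u z v * g (x, y0, z, u, v, w)) *
    \sum_y pxy x y * pu y u * pw' u v x y w.
  move=> pw'; rewrite big_distrr /=; apply: eq_bigr => y _.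
  by rewrite /joint /= (hg x y y0); ring.
by rewrite !E key.
Qed.

Lemma probB E :
  InvB E -> prob (joint pxy pzx pu pv pw) E = prob (joint pxy pzx pu pv pwb) E.
Proof.
move=> hE; rewrite !prob_expect; apply: expectB => x y y' z u v w.
by rewrite (hE x y y').
Qed.

End Helpers.

Theorem lemma5 (R : realType) (X Y Z Xh Zh : finType)
    (pxy : X -> Y -> R) (pzx : X -> Z -> R)
    (dx : X -> Xh -> R) (dz : Z -> Zh -> R)
    (hpxy : is_pmf (fun xy : X * Y => pxy xy.1 xy.2))
    (hpzx : is_kernel pzx)
    (hdx : forall x xh, 0 <= dx x xh) (hdz : forall z zh, 0 <= dz z zh)
    (Dx Dz R1 R2 R3 : R) :
  region_bar pxy pzx dx dz Dx Dz R1 R2 R3 <-> region pxy pzx dx dz Dx Dz R1 R2 R3.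
Proof.
split; last first.
  case=> [U [V [W [pu [pv [pw [xh [zh [k1 k2 k3 ach]]]]]]]]].
  exists U, V, W, pu, pv, (fun u v x (_ : Y) => pw u v x), xh, zh; split => //.
case=> [U [V [W [pu [pv [pw [xh [zh [k1 k2 k3 ach]]]]]]]]].
have [[x0 y0] _] : exists t : X * Y, True.
  case: hpxy => _ hs.
  by apply: (nonempty_of_sum1 hs) => t; exists t.
have pxy0 : forall x y, 0 <= pxy x y by move=> x y; exact: (hpxy.1 (x, y)).
have pu0 : forall y u, 0 <= pu y u by move=> y u; exact: ((k1 y).1 u).
have pw0 : forall u v x y w, 0 <= pw u v x y w.
  by move=> u v x y w; exact: ((k3 (u, v, x, y)).1 w).
have s1 : forall u v x y, \sum_w pw u v x y w = 1.
  by move=> u v x y; exact: ((k3 (u, v, x, y)).2).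
pose pb := pwb pxy pu pw y0.
have s2 : forall u v x y, \sum_w pb u v x y w = 1.
  by move=> u v x y; exact: pwb_sum.
exists U, V, W, pu, pv, (fun u v x => pb u v x y0), xh, zh; split => //.
  move=> t; split; last exact: s2.
  by move=> w; exact: pwb_ge0.
case: ach => c1 c2 c3 d1 d2.
have hA : forall E, InvA E -> prob (joint pxy pzx pu pv pw) E = prob (joint pxy pzx pu pv pb) E.
  by move=> E; exact: (probA pxy pzx pu pv s1 s2).
have hB : forall E, InvB E -> prob (joint pxy pzx pu pv pw) E = prob (joint pxy pzx pu pv pb) E.
  by move=> E; exact: (probB pzx pv pxy0 pu0 pw y0).
split.
- by rewrite -(cmi_congr hA).
- by rewrite -(cmi_congr hA).
- by rewrite -(cmi_congr hB).
- by rewrite -(expectB pzx pv pxy0 pu0 pw y0).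
- by rewrite -(expectA pxy pzx pu pv s1 s2).
Qed.
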